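(* The set $\overline{P_2}$ of reduced words over $\{a,b,a^{-1},b^{-1}\}$ representing primitive elements of $F_2$ is not a context-free language.
   Context: $F_2$ is the free group on $\{a,b\}$; an element is primitive if it belongs to some basis of $F_2$. A word is reduced if it has no factor $xx^{-1}$ with $x\in\{a,b,a^{-1},b^{-1}\}$. *)

(* Defs.v *)
From Stdlib Require Import List Relations.
Import ListNotations.

Inductive letter : Type := La | Lb | LA | LB.  (* LA = a^-1, LB = b^-1 *)

Definition inv (x : letter) : letter :=
  match x with La => LA | LA => La | Lb => LB | LB => Lb end.

Definition letter_eqb (x y : letter) : bool :=
  match x, y with
  | La, La | Lb, Lb | LA, LA | LB, LB => true
  | _, _ => false
  end.

Definition word := list letter.

Fixpoint reduced (w : word) : Prop :=
  match w with
  | x :: ((y :: _) as t) => y <> inv x /\ reduced t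
  | _ => True
  end.

(* free reduction, using a reversed stack *)
Definition push (s : word) (x : letter) : word :=
  match s with
  | y :: t => if letter_eqb y (inv x) then t else x :: s
  | [] => [x]
  end.

Definition freered (w : word) : word := rev (fold_left push w []).

Definition winv (u : word) : word := rev (map inv u).

Definition subst2 (u v w : word) : word :=
  freered (flat_map (fun x => match x with
                              | La => u | LA => winv u
                              | Lb => v | LB => winv v end) w).

(* {u, v} is a basis of F_2: u, v are reduced words and the homomorphism
   F_2 -> F_2, a |-> u, b |-> v is bijective (an automorphism). *)
Definition is_basis2 (u v : word) : Prop :=
  reduced u /\ reduced v /\
  (forall w1 w2, reduced w1 -> reduced w2 -> subst2 u v w1 = subst2 u v w2 -> w1 = w2) /\
  (forall r, reduced r -> exists w, reduced w /\ subst2 u v w = r).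

Definition primitive (w : word) : Prop := exists v, is_basis2 w v.

Definition P2bar (w : word) : Prop := reduced w /\ primitive w.

Definition symbol (T : Type) := (nat + T)%type.

Definition cfg_step {T : Type} (rules : list (nat * list (symbol T)))
    (s1 s2 : list (symbol T)) : Prop :=
  exists u v X rhs, In (X, rhs) rules /\
    s1 = u ++ inl X :: v /\ s2 = u ++ rhs ++ v.

Definition cfg_generates {T : Type} (rules : list (nat * list (symbol T)))
    (start : nat) (w : list T) : Prop :=
  clos_refl_trans _ (cfg_step rules) [inl start] (map inr w).

Definition context_free {T : Type} (L : list T -> Prop) : Prop :=
  exists (rules : list (nat * list (symbol T))) (start : nat),
    forall w, L w <-> cfg_generates rules start w.

(* Main.v *)
Require Import Defs.
From Stdlib Require Import List Relations ZArith Lia Arith.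
Import ListNotations.

Lemma inv_inv x : inv (inv x) = x. Proof. destruct x; reflexivity. Qed.
Lemma eqb_true x y : letter_eqb x y = true -> x = y.
Proof. destruct x, y; simpl; congruence. Qed.
Lemma eqb_refl x : letter_eqb x x = true. Proof. destruct x; reflexivity. Qed.

Definition Fs (w s : word) : word := fold_left push w s.

Lemma reduced_tail x l : reduced (x :: l) -> reduced l.
Proof. destruct l; simpl; tauto. Qed.

Lemma reduced_cons2 x y l : reduced (x :: y :: l) <-> y <> inv x /\ reduced (y :: l).
Proof. simpl. tauto. Qed.

Lemma push_reduced s x : reduced s -> reduced (push s x).
Proof.
  destruct s as [|y t]; simpl; intros H; [exact I|].
  destruct (letter_eqb y (inv x)) eqn:E.
  - exact (reduced_tail _ _ H).
  - apply reduced_cons2. split; [|exact H]. intro C. subst y.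
    rewrite eqb_refl in E. discriminate.
Qed.

Lemma Fs_reduced w s : reduced s -> reduced (Fs w s).
Proof.
  revert s; induction w as [|x w IH]; simpl; intros s H; auto.
  apply IH, push_reduced, H.
Qed.

Lemma push_cancel s x : reduced s -> push (push s x) (inv x) = s.
Proof.
  intros H. destruct s as [|y t].
  - simpl. rewrite inv_inv, eqb_refl. reflexivity.
  - simpl. destruct (letter_eqb y (inv x)) eqn:E.
    + apply eqb_true in E. subst y. destruct t as [|y' t'].
      * reflexivity.
      * apply reduced_cons2 in H. destruct H as [H1 _].
        simpl. rewrite inv_inv.
        destruct (letter_eqb y' x) eqn:E2.
        -- apply eqb_true in E2. subst. rewrite inv_inv in H1. congruence.
        -- reflexivity.
    + simpl. rewrite inv_inv, eqb_refl. reflexivity.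
Qed.

Lemma winv_cons x w : winv (x :: w) = winv w ++ [inv x].
Proof. reflexivity. Qed.
Lemma winv_app a b : winv (a ++ b) = winv b ++ winv a.
Proof. unfold winv. rewrite map_app, rev_app_distr. reflexivity. Qed.
Lemma winv_involutive w : winv (winv w) = w.
Proof.
  unfold winv. rewrite map_rev, rev_involutive, map_map.
  rewrite (map_ext _ id). apply map_id. intro; apply inv_inv.
Qed.

Lemma Fs_inv w s : reduced s -> Fs (winv w) (Fs w s) = s.
Proof.
  revert s; induction w as [|x w IH]; intros s H; [reflexivity|].
  rewrite winv_cons. unfold Fs. rewrite fold_left_app. simpl.
  fold (Fs w (push s x)). fold (Fs (winv w) (Fs w (push s x))).
  rewrite IH by (apply push_reduced; auto). apply push_cancel; auto.
Qed.

Lemma Fs_inv' w s : reduced s -> Fs w (Fs (winv w) s) = s.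
Proof. intros H. rewrite <- (winv_involutive w) at 1. apply Fs_inv, H. Qed.

Lemma Fs_app a b s : Fs (a ++ b) s = Fs b (Fs a s).
Proof. apply fold_left_app. Qed.

Lemma reduced_char l : reduced l <-> forall p q x y, l = p ++ x :: y :: q -> y <> inv x.
Proof.
  induction l as [|z l IH]; split.
  - intros _ p q x y E. destruct p; discriminate.
  - intros; exact I.
  - intros H p q x y E. destruct p as [|z' p].
    + simpl in E. injection E as E1 E. subst. apply reduced_cons2 in H. destruct H; assumption.
    + simpl in E. injection E as -> E. apply IH in E; auto. exact (reduced_tail _ _ H).
  - intros H. destruct l as [|y q]; [exact I|]. apply reduced_cons2. split.
    + apply (H [] q z y). reflexivity.
    + apply IH. intros p q' x y' E. apply (H (z :: p) q'). rewrite E. reflexivity.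
Qed.

Lemma reduced_rev l : reduced l -> reduced (rev l).
Proof.
  rewrite !reduced_char. intros H p q x y E.
  assert (E2 : l = rev q ++ y :: x :: rev p).
  { rewrite <- (rev_involutive l), E. rewrite rev_app_distr. simpl.
    repeat rewrite <- app_assoc. reflexivity. }
  apply H in E2. intro C. apply E2. rewrite C, inv_inv. reflexivity.
Qed.

Lemma freered_reduced w : reduced (freered w).
Proof. unfold freered. apply reduced_rev. apply Fs_reduced. exact I. Qed.

Lemma Fs_reduced_id w s : reduced (rev s ++ w) -> Fs w s = rev w ++ s.
Proof.
  revert s; induction w as [|x w IH]; intros s H; [reflexivity|].
  simpl. fold (Fs w (push s x)).
  assert (Hp : push s x = x :: s).
  { destruct s as [|y t]; [reflexivity|]. simpl.
    destruct (letter_eqb y (inv x)) eqn:E; [|reflexivity].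
    apply eqb_true in E. exfalso.
    rewrite reduced_char in H. apply (H (rev t) w y x).
    - simpl. rewrite <- app_assoc. reflexivity.
    - rewrite E, inv_inv. reflexivity. }
  rewrite Hp, IH.
  - simpl. rewrite <- app_assoc. reflexivity.
  - simpl. rewrite <- app_assoc. exact H.
Qed.

Lemma freered_id w : reduced w -> freered w = w.
Proof.
  intros H. unfold freered. fold (Fs w []). rewrite Fs_reduced_id.
  - rewrite app_nil_r, rev_involutive. reflexivity.
  - exact H.
Qed.

Lemma Fs_freered w s : reduced s -> Fs (freered w) s = Fs w s.
Proof.
  unfold freered. fold (Fs w []). intros Hs.
  induction w as [|x w IH] using rev_ind; [reflexivity|].
  rewrite !Fs_app. simpl.
  destruct (Fs w []) as [|y t] eqn:E.
  - simpl. rewrite <- IH. reflexivity.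
  - simpl. destruct (letter_eqb y (inv x)) eqn:E2.
    + apply eqb_true in E2. subst y. simpl in IH. rewrite Fs_app in IH. simpl in IH.
      rewrite <- IH.
      pose proof (push_cancel (Fs (rev t) s) (inv x) (Fs_reduced _ _ Hs)) as PC.
      rewrite inv_inv in PC. symmetry. exact PC.
    + simpl. rewrite Fs_app. simpl. rewrite <- IH. reflexivity.
Qed.

Definition sub (u v : word) (x : letter) : word :=
  match x with La => u | LA => winv u | Lb => v | LB => winv v end.

Lemma subst2_eq u v w : subst2 u v w = freered (flat_map (sub u v) w).
Proof. reflexivity. Qed.

Lemma sub_inv u v x : sub u v (inv x) = winv (sub u v x).
Proof. destruct x; simpl; rewrite ?winv_involutive; reflexivity. Qed.

Lemma flat_map_winv u v w : flat_map (sub u v) (winv w) = winv (flat_map (sub u v) w).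
Proof.
  induction w as [|x w IH]; [reflexivity|].
  rewrite winv_cons, flat_map_app, IH. simpl. rewrite app_nil_r, sub_inv.
  rewrite winv_app. reflexivity.
Qed.

Lemma Fs_hom u v w s : reduced s ->
  Fs (flat_map (sub u v) (freered w)) s = Fs (flat_map (sub u v) w) s.
Proof.
  intros Hs.
  assert (G : forall st, reduced st -> forall s, reduced s ->
    Fs (flat_map (sub u v) (rev st ++ w)) s = Fs (flat_map (sub u v) (rev (Fs w st))) s).
  { clear s Hs. induction w as [|x w IH]; intros st Hst s Hs.
    - simpl. rewrite app_nil_r. reflexivity.
    - simpl. fold (Fs w (push st x)). rewrite <- IH by (auto using push_reduced).
      destruct st as [|y t]; simpl.
      + reflexivity.
      + destruct (letter_eqb y (inv x)) eqn:E.
        * apply eqb_true in E. subst y.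
          replace ((rev t ++ [inv x]) ++ x :: w) with (rev t ++ [inv x; x] ++ w)
            by (rewrite <- app_assoc; reflexivity).
          rewrite !flat_map_app, !Fs_app. f_equal.
          simpl. rewrite !app_nil_r, Fs_app, sub_inv.
          apply Fs_inv'. apply Fs_reduced, Hs.
        * simpl. repeat rewrite <- app_assoc. reflexivity. }
  unfold freered. symmetry. exact (G [] I s Hs).
Qed.

Lemma Fs_winv_freered p s : reduced s -> Fs (winv (freered p)) s = Fs (winv p) s.
Proof.
  intros Hs.
  set (p' := freered p).
  transitivity (Fs (winv p') (Fs p' (Fs (winv p) s))).
  - unfold p'. rewrite Fs_freered by (apply Fs_reduced, Hs). rewrite Fs_inv'; auto.
  - apply Fs_inv. apply Fs_reduced, Hs.
Qed.

Lemma freered_Fs w : freered w = rev (Fs w []).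
Proof. reflexivity. Qed.

Lemma subst2_comp u v u' v' w :
  subst2 u v (subst2 u' v' w) = subst2 (subst2 u v u') (subst2 u v v') w.
Proof.
  rewrite (subst2_eq u v (subst2 u' v' w)), (subst2_eq (subst2 u v u')).
  unfold freered at 1 2. f_equal.
  fold (Fs (flat_map (sub u v) (subst2 u' v' w)) []).
  fold (Fs (flat_map (sub (subst2 u v u') (subst2 u v v')) w) []).
  rewrite (subst2_eq u' v' w), Fs_hom by exact I.
  assert (G : forall s, reduced s ->
    Fs (flat_map (sub u v) (flat_map (sub u' v') w)) s =
    Fs (flat_map (sub (subst2 u v u') (subst2 u v v')) w) s).
  { induction w as [|x w IH]; intros s Hs; [reflexivity|].
    simpl. rewrite flat_map_app, !Fs_app. rewrite IH.
    2:{ apply Fs_reduced, Hs. }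
    f_equal. rewrite !subst2_eq. destruct x; simpl;
    first [rewrite Fs_freered; auto | rewrite Fs_winv_freered, flat_map_winv; auto]. }
  apply G. exact I.
Qed.

Lemma subst2_id w : reduced w -> subst2 [La] [Lb] w = w.
Proof.
  intros H. rewrite subst2_eq.
  replace (flat_map (sub [La] [Lb]) w) with w. apply freered_id, H.
  clear H. induction w as [|x w IH]; [reflexivity|]. simpl. rewrite <- IH.
  destruct x; reflexivity.
Qed.

Lemma basis_inv u v u' v' : reduced u -> reduced v ->
  subst2 u' v' u = [La] -> subst2 u' v' v = [Lb] ->
  subst2 u v u' = [La] -> subst2 u v v' = [Lb] -> is_basis2 u v.
Proof.
  intros Hu Hv E1 E2 E3 E4. repeat split; auto.
  - intros w1 w2 H1 H2 E.
    rewrite <- (subst2_id w1 H1), <- (subst2_id w2 H2), <- E1, <- E2, <- !subst2_comp, E.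
    reflexivity.
  - intros r Hr. exists (subst2 u' v' r). split.
    + apply freered_reduced.
    + rewrite subst2_comp, E3, E4. apply subst2_id, Hr.
Qed.

Lemma basis_comp u1 v1 u2 v2 : is_basis2 u1 v1 -> is_basis2 u2 v2 ->
  is_basis2 (subst2 u1 v1 u2) (subst2 u1 v1 v2).
Proof.
  intros [_ [_ [I1 S1]]] [_ [_ [I2 S2]]].
  repeat split; try apply freered_reduced.
  - intros w1 w2 H1 H2 E. rewrite <- !subst2_comp in E.
    apply I2; auto. apply I1; auto; apply freered_reduced.
  - intros r Hr. destruct (S1 r Hr) as [w1 [Hw1 E1]].
    destruct (S2 w1 Hw1) as [w [Hw E]]. exists w. split; auto.
    rewrite <- subst2_comp, E. exact E1.
Qed.

Fixpoint sw (f : letter -> Z) (w : word) : Z :=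
  match w with [] => 0%Z | x :: t => (f x + sw f t)%Z end.
Definition fa (x : letter) : Z := match x with La => 1 | LA => -1 | _ => 0 end%Z.
Definition fb (x : letter) : Z := match x with Lb => 1 | LB => -1 | _ => 0 end%Z.

Lemma sw_app f a b : sw f (a ++ b) = (sw f a + sw f b)%Z.
Proof. induction a; simpl; lia. Qed.
Lemma sw_rev f a : sw f (rev a) = sw f a.
Proof. induction a; simpl; rewrite ?sw_app; simpl; lia. Qed.

Definition oddf f := forall x, f (inv x) = (- f x)%Z.
Lemma fa_odd : oddf fa. Proof. intros []; reflexivity. Qed.
Lemma fb_odd : oddf fb. Proof. intros []; reflexivity. Qed.

Lemma sw_push f s x : oddf f -> sw f (push s x) = (sw f s + f x)%Z.
Proof.
  intros Hf. destruct s as [|y t]; simpl; [lia|].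
  destruct (letter_eqb y (inv x)) eqn:E; simpl.
  - apply eqb_true in E. subst. rewrite Hf. lia.
  - lia.
Qed.
Lemma sw_Fs f w s : oddf f -> sw f (Fs w s) = (sw f s + sw f w)%Z.
Proof.
  intros Hf. revert s; induction w; intros s; simpl; [lia|].
  fold (Fs w (push s a)). rewrite IHw, sw_push; auto. lia.
Qed.
Lemma sw_freered f w : oddf f -> sw f (freered w) = sw f w.
Proof. intros Hf. rewrite freered_Fs, sw_rev, sw_Fs; simpl; auto. Qed.
Lemma sw_winv f w : oddf f -> sw f (winv w) = (- sw f w)%Z.
Proof.
  intros Hf. unfold winv. rewrite sw_rev. induction w; simpl; auto. rewrite Hf. lia.
Qed.

Lemma sw_subst2 f u v w : oddf f ->
  sw f (subst2 u v w) = (sw fa w * sw f u + sw fb w * sw f v)%Z.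
Proof.
  intros Hf. rewrite subst2_eq, sw_freered; auto.
  induction w as [|x w IH]; cbn [sw flat_map]; [ring|].
  rewrite sw_app, IH. destruct x; cbn [sw fa fb sub]; rewrite ?sw_winv by exact Hf; ring.
Qed.

Lemma basis_gcd u v d : is_basis2 u v -> (d | sw fa u)%Z -> (d | sw fb u)%Z -> (d | 1)%Z.
Proof.
  intros [_ [_ [_ S]]] Da Db.
  destruct (S [La] I) as [w1 [_ E1]]. destruct (S [Lb] I) as [w2 [_ E2]].
  assert (A1 := f_equal (sw fa) E1). assert (B1 := f_equal (sw fb) E1).
  assert (A2 := f_equal (sw fa) E2). assert (B2 := f_equal (sw fb) E2).
  rewrite sw_subst2 in A1, B1, A2, B2 by (apply fa_odd || apply fb_odd).
  simpl in A1, B1, A2, B2.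
  set (A := sw fa u) in *. set (B := sw fb u) in *.
  set (C := sw fa v) in *. set (D := sw fb v) in *.
  set (al := sw fa w1) in *. set (be := sw fb w1) in *.
  set (ga := sw fa w2) in *. set (de := sw fb w2) in *.
  assert (Key : ((A * D - B * C) * (al * de - be * ga))%Z = 1%Z).
  { transitivity ((al * A + be * C) * (ga * B + de * D) - (al * B + be * D) * (ga * A + de * C))%Z.
    - ring.
    - rewrite A1, B1, A2, B2. reflexivity. }
  rewrite <- Key. apply Z.divide_mul_l.
  apply Z.divide_sub_r; apply Z.divide_mul_l; auto.
Qed.

Definition rep (v : word) (i : nat) : word := concat (repeat v i).

Lemma flat_map_repeat f (x : letter) k : flat_map f (repeat x k) = rep (f x) k.
Proof. induction k; simpl; [reflexivity|]. rewrite IHk. reflexivity. Qed.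
Lemma rep_single c k : rep [c] k = repeat c k.
Proof. induction k; simpl; [reflexivity|]. unfold rep in *. simpl. rewrite IHk. reflexivity. Qed.
Lemma winv_repeat x k : winv (repeat x k) = repeat (inv x) k.
Proof. unfold winv. rewrite map_repeat, rev_repeat. reflexivity. Qed.

Lemma freered_cancel1 a p : freered (a ++ p ++ winv p) = freered a.
Proof.
  rewrite !freered_Fs, !Fs_app. rewrite Fs_inv; auto. apply Fs_reduced; exact I.
Qed.
Lemma freered_cancel2 p a : freered (p ++ winv p ++ a) = freered a.
Proof.
  rewrite !freered_Fs, !Fs_app. rewrite Fs_inv; auto. exact I.
Qed.

Definition pos (w : word) := Forall (fun x => x = La \/ x = Lb) w.

Lemma pos_reduced w : pos w -> reduced w.
Proof.
  intros H. apply reduced_char. intros p q x y E. subst w.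
  apply Forall_app in H. destruct H as [_ H]. inversion H; subst.
  inversion H3; subst. destruct H2 as [-> | ->]; destruct H4 as [-> | ->]; discriminate.
Qed.

Lemma pos_repeat x k : (x = La \/ x = Lb) -> pos (repeat x k).
Proof. intros Hx. apply Forall_forall. intros y Hy. apply repeat_spec in Hy. subst; auto. Qed.
Lemma pos_rep v k : pos v -> pos (rep v k).
Proof. intros H. induction k; simpl; [constructor|]. unfold rep in *; simpl. apply Forall_app; auto. Qed.

Definition phiA n := La :: repeat Lb n.
Definition w0 n M := rep (phiA n) M ++ [Lb].

Lemma pos_phiA n : pos (phiA n).
Proof. constructor; auto. apply pos_repeat; auto. Qed.
Lemma pos_w0 n M : pos (w0 n M).
Proof. apply Forall_app. split. apply pos_rep, pos_phiA. constructor; [right; reflexivity|constructor]. Qed.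

Lemma basis_phi n : is_basis2 (phiA n) [Lb].
Proof.
  apply (basis_inv _ _ (La :: repeat LB n) [Lb]).
  - apply pos_reduced, pos_phiA.
  - exact I.
  - rewrite subst2_eq. unfold phiA. cbn [flat_map sub]. rewrite flat_map_repeat.
    cbn [sub]. rewrite rep_single.
    change (La :: repeat LB n ++ repeat Lb n) with ([La] ++ repeat LB n ++ repeat Lb n).
    replace (repeat Lb n) with (winv (repeat LB n)) by (rewrite winv_repeat; reflexivity).
    change ((La :: ?a) ++ ?b) with ([La] ++ a ++ b).
    rewrite ?app_nil_l. rewrite freered_cancel1. reflexivity.
  - reflexivity.
  - rewrite subst2_eq. cbn [flat_map sub]. rewrite flat_map_repeat.
    cbn [sub]. change (winv [Lb]) with [LB]. rewrite rep_single. unfold phiA.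
    change ((La :: repeat Lb n) ++ repeat LB n) with ([La] ++ repeat Lb n ++ repeat LB n).
    replace (repeat LB n) with (winv (repeat Lb n)) by (rewrite winv_repeat; reflexivity).
    change ((La :: ?a) ++ ?b) with ([La] ++ a ++ b).
    rewrite ?app_nil_l. rewrite freered_cancel1. reflexivity.
  - reflexivity.
Qed.

Lemma basis_psi M : is_basis2 (repeat La M ++ [Lb]) [La].
Proof.
  apply (basis_inv _ _ [Lb] (repeat LB M ++ [La])).
  - apply pos_reduced. apply Forall_app; split. apply pos_repeat; auto. constructor; [right; reflexivity|constructor].
  - exact I.
  - rewrite subst2_eq. rewrite flat_map_app, flat_map_repeat. cbn [flat_map sub].
    rewrite rep_single, app_nil_r.
    replace (repeat LB M) with (winv (repeat Lb M)) by (rewrite winv_repeat; reflexivity).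
    rewrite freered_cancel2. reflexivity.
  - reflexivity.
  - reflexivity.
  - rewrite subst2_eq. rewrite flat_map_app, flat_map_repeat. cbn [flat_map sub].
    change (winv (repeat La M ++ [Lb])) with (winv (repeat La M ++ [Lb])).
    change (winv [La]) with [LA]. rewrite rep_single, app_nil_r.
    replace (repeat LA M) with (winv (repeat La M)) by (rewrite winv_repeat; reflexivity).
    replace (repeat La M) with (winv (winv (repeat La M))) at 2 by apply winv_involutive.
    rewrite freered_cancel2. reflexivity.
Qed.

Lemma w0_primitive n M : primitive (w0 n M).
Proof.
  exists (subst2 (phiA n) [Lb] [La]).
  replace (w0 n M) with (subst2 (phiA n) [Lb] (repeat La M ++ [Lb])).
  - apply basis_comp; [apply basis_phi | apply basis_psi].
  - rewrite subst2_eq, flat_map_app, flat_map_repeat. cbn [flat_map sub].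
    apply freered_id, pos_reduced, pos_w0.
Qed.

Fixpoint good (n k : nat) (l : word) : Prop :=
  match l with
  | [] => True
  | La :: t => k = 0 /\ good n n t
  | _ :: t => good n (pred k) t
  end.

Lemma good_zero n k l : pos l -> good n k l -> length l <= k -> sw fa l = 0%Z.
Proof.
  revert k; induction l as [|x l IH]; intros k Hp Hg Hl; [reflexivity|].
  inversion Hp; subst. destruct H1 as [-> | ->]; simpl in *.
  - lia.
  - apply (IH (pred k)); auto. lia.
Qed.

Lemma good_le1 n k l : pos l -> good n k l -> length l <= S n -> (sw fa l <= 1)%Z.
Proof.
  revert k; induction l as [|x l IH]; intros k Hp Hg Hl; simpl; [lia|].
  inversion Hp; subst. destruct H1 as [-> | ->]; simpl in *.
  - rewrite (good_zero n n l); auto; [lia|tauto|lia].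
  - apply (IH (pred k)) in H2; auto. lia.
Qed.

Lemma good_drop n k p l : good n k (p ++ l) -> exists k', good n k' l.
Proof.
  revert k; induction p as [|x p IH]; intros k H; [eauto|].
  destruct x; simpl in H; try (destruct H as [_ H]); eapply IH; eauto.
Qed.

Lemma good_take n k p l : good n k (p ++ l) -> good n k p.
Proof.
  revert k; induction p as [|x p IH]; intros k H; simpl; auto.
  destruct x; simpl in H; try (destruct H as [? H]); eauto.
Qed.

Lemma good_repeat n k j l : good n (k - j) l -> good n k (repeat Lb j ++ l).
Proof.
  revert k; induction j; intros k H; simpl.
  - rewrite Nat.sub_0_r in H. exact H.
  - apply IHj. replace (pred k - j) with (k - S j) by lia. exact H.
Qed.

Lemma good_w0 n M : good n 0 (w0 n M).
Proof.
  unfold w0. induction M; simpl; [exact I|].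
  unfold rep in *. simpl. split; [reflexivity|].
  rewrite <- app_assoc. apply good_repeat. rewrite Nat.sub_diag. exact IHM.
Qed.

Lemma sw_rep f v i : sw f (rep v i) = (Z.of_nat i * sw f v)%Z.
Proof. induction i; [reflexivity|]. unfold rep in *; cbn [repeat concat]. rewrite sw_app, IHi. rewrite Nat2Z.inj_succ. ring. Qed.

Lemma pos_sw l : pos l -> (0 <= sw fa l)%Z /\ (0 <= sw fb l)%Z /\
  (sw fa l + sw fb l = Z.of_nat (length l))%Z.
Proof.
  induction l as [|x l IH]; intros H; cbn [sw length]; [simpl; lia|].
  inversion H; subst. destruct (IH H3) as [A [B C]].
  rewrite Nat2Z.inj_succ. destruct H2 as [-> | ->]; cbn [fa fb]; lia.
Qed.

Lemma sw_w0 n M : sw fa (w0 n M) = Z.of_nat M /\ sw fb (w0 n M) = (Z.of_nat M * Z.of_nat n + 1)%Z.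
Proof.
  unfold w0. rewrite !sw_app, !sw_rep. unfold phiA. cbn [sw fa fb].
  assert (forall k, sw fa (repeat Lb k) = 0%Z /\ sw fb (repeat Lb k) = Z.of_nat k) as R.
  { induction k; cbn [repeat sw fa fb]; [simpl; lia|]. rewrite Nat2Z.inj_succ. lia. }
  destruct (R n) as [R1 R2]. rewrite R1, R2. lia.
Qed.

Definition grammar := list (nat * list (symbol letter)).

Inductive gen (R : grammar) : list (symbol letter) -> word -> nat -> Prop :=
| g_nil : gen R [] [] 0
| g_t t s w k : gen R s w k -> gen R (inr t :: s) (t :: w) k
| g_nt X rhs s w1 w2 k1 k2 : In (X, rhs) R -> gen R rhs w1 k1 -> gen R s w2 k2 ->
    gen R (inl X :: s) (w1 ++ w2) (S (k1 + k2)).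

Lemma gen_app R s1 w1 k1 s2 w2 k2 : gen R s1 w1 k1 -> gen R s2 w2 k2 ->
  gen R (s1 ++ s2) (w1 ++ w2) (k1 + k2).
Proof.
  intros H1 H2. induction H1; simpl.
  - exact H2.
  - constructor; auto.
  - rewrite <- app_assoc. replace (S (k1 + k0 + k2)) with (S (k1 + (k0 + k2))) by lia.
    econstructor; eauto.
Qed.

Lemma gen_split R s1 s2 w k : gen R (s1 ++ s2) w k ->
  exists w1 w2 k1 k2, w = w1 ++ w2 /\ k = k1 + k2 /\ gen R s1 w1 k1 /\ gen R s2 w2 k2.
Proof.
  revert w k; induction s1 as [|a s1 IH]; intros w k H.
  - exists [], w, 0, k. repeat split; auto. constructor.
  - simpl in H. inversion H; subst.
    + destruct (IH _ _ H4) as [a1 [a2 [b1 [b2 [-> [-> [A B]]]]]]].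
      exists (t :: a1), a2, b1, b2. repeat split; auto. constructor; auto.
    + destruct (IH _ _ H6) as [w1' [w2' [k1' [k2' [-> [-> [A B]]]]]]].
      exists (w1 ++ w1'), w2', (S (k1 + k1')), k2'. repeat split.
      * rewrite app_assoc; reflexivity.
      * lia.
      * econstructor; eauto.
      * exact B.
Qed.

Lemma gen_single R X w k : gen R [inl X] w k ->
  exists rhs k1, In (X, rhs) R /\ gen R rhs w k1 /\ k = S k1.
Proof.
  intros H. inversion H; subst. inversion H6; subst.
  exists rhs, k1. rewrite app_nil_r, Nat.add_0_r. auto.
Qed.

Lemma gen_single' R X rhs w k : In (X, rhs) R -> gen R rhs w k -> gen R [inl X] w (S k).
Proof.
  intros H1 H2. rewrite <- (app_nil_r w). replace (S k) with (S (k + 0)) by lia.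
  econstructor; eauto. constructor.
Qed.

Definition ctx R Y X u z c := forall w k, gen R [inl X] w k -> gen R [inl Y] (u ++ w ++ z) (c + k).

Lemma ctx_id R X : ctx R X X [] [] 0.
Proof. intros w k H. rewrite app_nil_r. exact H. Qed.

Lemma ctx_comp R X Y Z u z c u' z' c' : ctx R X Y u z c -> ctx R Y Z u' z' c' ->
  ctx R X Z (u ++ u') (z' ++ z) (c + c').
Proof.
  intros H1 H2 w k H. specialize (H1 _ _ (H2 _ _ H)).
  replace (c + c' + k) with (c + (c' + k)) by lia.
  replace ((u ++ u') ++ w ++ z' ++ z) with (u ++ (u' ++ w ++ z') ++ z)
    by (repeat rewrite <- app_assoc; reflexivity).
  exact H1.
Qed.

Lemma rep_S v i : rep v (S i) = v ++ rep v i.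
Proof. reflexivity. Qed.
Lemma rep_S' v i : rep v (S i) = rep v i ++ v.
Proof.
  induction i. unfold rep; simpl; rewrite app_nil_r; reflexivity.
  rewrite rep_S. rewrite IHi at 1. rewrite app_assoc. reflexivity.
Qed.

Lemma ctx_pump R X v y c x k : ctx R X X v y c -> gen R [inl X] x k ->
  forall i, gen R [inl X] (rep v i ++ x ++ rep y i) (i * c + k).
Proof.
  intros Hc Hx i. induction i; simpl.
  - rewrite app_nil_r. exact Hx.
  - apply Hc in IHi. rewrite rep_S, rep_S'.
    replace ((v ++ rep v i) ++ x ++ rep y i ++ y) with (v ++ (rep v i ++ x ++ rep y i) ++ y)
      by (repeat rewrite <- app_assoc; reflexivity).
    replace (c + i * c + k) with (c + (i * c + k)) by lia. exact IHi.
Qed.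

Lemma split_heavy R B : 1 <= B -> forall s w k, gen R s w k -> length s * B < length w ->
  exists Y u w' z c k', (forall w'' k'', gen R [inl Y] w'' k'' -> gen R s (u ++ w'' ++ z) (c + k''))
    /\ gen R [inl Y] w' k' /\ k = c + k' /\ w = u ++ w' ++ z /\ B < length w'.
Proof.
  intros HB s w k H. induction H; intros Hl; simpl in Hl.
  - lia.
  - destruct IHgen as [Y [u [w' [z [c [k' [F [G [E1 [E2 E3]]]]]]]]]]. nia.
    exists Y, (t :: u), w', z, c, k'. repeat split; auto.
    + intros w'' k'' Hg. simpl. constructor. apply F; auto.
    + subst w. reflexivity.
  - rewrite length_app in Hl.
    destruct (Nat.lt_ge_cases B (length w1)) as [Hb|Hb].
    + exists X, [], w1, w2, k2, (S k1). repeat split.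
      * intros w'' k'' Hg. apply gen_single in Hg. destruct Hg as [rhs' [k1' [I' [G' ->]]]].
        replace (k2 + S k1') with (S (k1' + k2)) by lia. simpl. econstructor; eauto.
      * eapply gen_single'; eauto.
      * lia.
      * exact Hb.
    + destruct IHgen2 as [Y [u [w' [z [c [k' [F [G [E1 [E2 E3]]]]]]]]]]. nia.
      exists Y, (w1 ++ u), w', z, (S (k1 + c)), k'. repeat split; auto.
      * intros w'' k'' Hg. rewrite <- app_assoc.
        replace (S (k1 + c) + k'') with (S (k1 + (c + k''))) by lia.
        econstructor; eauto.
      * lia.
      * subst w2. rewrite app_assoc. reflexivity.
Qed.

Definition mR (R : grammar) := S (list_max (map (fun p => length (snd p)) R)).

Lemma rhs_le R X rhs : In (X, rhs) R -> length rhs <= mR R.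
Proof.
  intros H. unfold mR.
  assert (list_max (map (fun p => length (snd p)) R) <= list_max (map (fun p => length (snd p)) R)) as L by lia.
  apply list_max_le in L. rewrite Forall_forall in L.
  specialize (L (length rhs)). simpl in L.
  assert (length rhs <= list_max (map (fun p => length (snd p)) R)); [|lia].
  apply L. apply in_map_iff. exists (X, rhs). auto.
Qed.

Lemma step R X w k B : 1 <= B -> gen R [inl X] w k -> mR R * B < length w ->
  exists Y u w' z c k', ctx R X Y u z c /\ 1 <= c /\ gen R [inl Y] w' k' /\ k = c + k'
    /\ w = u ++ w' ++ z /\ B < length w'.
Proof.
  intros HB H Hl. apply gen_single in H. destruct H as [rhs [k1 [I [G ->]]]].
  assert (length rhs <= mR R) by (eapply rhs_le; eauto).
  destruct (split_heavy R B HB _ _ _ G) as [Y [u [w' [z [c [k' [F [G' [E1 [E2 E3]]]]]]]]]]. nia.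
  exists Y, u, w', z, (S c), k'. repeat split; auto.
  - intros w'' k'' Hg. simpl. eapply gen_single'; eauto.
  - lia.
  - lia.
Qed.

Lemma pow_ge1 m j : 1 <= m -> 1 <= m ^ j.
Proof. intros H. induction j; simpl; nia. Qed.

Lemma window R B : 1 <= B -> forall k X w, gen R [inl X] w k -> B < length w ->
  exists Y u w' z c k', ctx R X Y u z c /\ gen R [inl Y] w' k' /\ k = c + k'
    /\ w = u ++ w' ++ z /\ B < length w' /\ length w' <= mR R * B.
Proof.
  intros HB k. induction k as [k IH] using (well_founded_induction lt_wf).
  intros X w H Hl.
  destruct (Nat.le_gt_cases (length w) (mR R * B)) as [Hle|Hgt].
  - exists X, [], w, [], 0, k. repeat split; auto.
    + apply ctx_id.
    + rewrite app_nil_r; reflexivity.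
  - destruct (step R X w k B HB H Hgt) as [Y [u [w' [z [c [k' [Cx [Hc [G [E1 [E2 E3]]]]]]]]]]].
    destruct (IH k' ltac:(lia) Y w' G E3) as [Y2 [u2 [w2 [z2 [c2 [k2 [Cx2 [G2 [F1 [F2 [F3 F4]]]]]]]]]]].
    exists Y2, (u ++ u2), w2, (z2 ++ z), (c + c2), k2. repeat split; auto.
    + eapply ctx_comp; eauto.
    + lia.
    + subst. repeat rewrite <- app_assoc. reflexivity.
Qed.

Record entry := mkE { eY : nat; ePa : word; eQb : word; eCa : nat; eu : word; ez : word; ec : nat }.

Definition einv R T X P Q C (e : entry) :=
  ctx R T (eY e) (ePa e) (eQb e) (eCa e) /\ ctx R (eY e) X (eu e) (ez e) (ec e) /\ 1 <= ec e /\
  P = ePa e ++ eu e /\ Q = ez e ++ eQb e /\ C = eCa e + ec e.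

Definition upd (u1 z1 : word) (c1 : nat) (e : entry) :=
  mkE (eY e) (ePa e) (eQb e) (eCa e) (eu e ++ u1) (z1 ++ ez e) (ec e + c1).

Lemma found R T X w k P Q C S : gen R [inl X] w k -> Forall (einv R T X P Q C) S -> In X (map eY S) ->
  exists Y a b ca u z c x kx, ctx R T Y a b ca /\ ctx R Y Y u z c /\ 1 <= c /\
    gen R [inl Y] x kx /\ P ++ w ++ Q = a ++ u ++ x ++ z ++ b /\ C + k = ca + c + kx.
Proof.
  intros H HS Hin. apply in_map_iff in Hin; destruct Hin as [e [He Hin]].
  rewrite Forall_forall in HS; destruct (HS e Hin) as [A1 [A2 [A3 [A4 [A5 A6]]]]].
  rewrite He in A1, A2.
  exists X, (ePa e), (eQb e), (eCa e), (eu e), (ez e), (ec e), w, k.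
  repeat split; auto; try (subst P Q; repeat rewrite <- app_assoc; reflexivity); try lia.
Qed.

Lemma repet R T : forall j S X w k P Q C, gen R [inl X] w k -> ctx R T X P Q C ->
  Forall (einv R T X P Q C) S -> NoDup (map eY S) -> incl (map eY S) (map fst R) ->
  length R <= length S + j -> mR R ^ j < length w ->
  exists Y a b ca u z c x kx, ctx R T Y a b ca /\ ctx R Y Y u z c /\ 1 <= c /\
    gen R [inl Y] x kx /\ P ++ w ++ Q = a ++ u ++ x ++ z ++ b /\ C + k = ca + c + kx.
Proof.
  induction j as [|j IH]; intros S X w k P Q C H HT HS HN HI HK Hl;
  (destruct (in_dec Nat.eq_dec X (map eY S)) as [Hin|Hnin];
   [ eapply found; eauto | ]).
  - exfalso. apply gen_single in H. destruct H as [rhs [k1 [I _]]].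
    assert (NoDup (X :: map eY S)) by (constructor; auto).
    assert (incl (X :: map eY S) (map fst R)).
    { intros y [<- | Hy]; auto. apply in_map_iff. exists (X, rhs); auto. }
    pose proof (NoDup_incl_length H H0). simpl in H1. rewrite length_map in H1, H1. lia.
  - assert (1 <= mR R) by (unfold mR; lia).
    simpl in Hl.
    destruct (step R X w k (mR R ^ j) (pow_ge1 _ _ H0) H Hl)
      as [Y [u1 [w' [z1 [c1 [k' [Cx [Hc [G [E1 [E2 E3]]]]]]]]]]].
    destruct (IH (mkE X P Q C u1 z1 c1 :: map (upd u1 z1 c1) S) Y w' k' (P ++ u1) (z1 ++ Q) (C + c1))
      as [Y2 [a [b [ca [u [z [c [x [kx [B1 [B2 [B3 [B4 [B5 B6]]]]]]]]]]]]]]; auto.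
    + eapply ctx_comp; eauto.
    + constructor.
      * repeat split; simpl; auto.
      * apply Forall_map. eapply Forall_impl; [|exact HS].
        intros e [A1 [A2 [A3 [A4 [A5 A6]]]]]. unfold upd, einv; simpl.
        repeat split; auto.
        -- eapply ctx_comp; eauto.
        -- lia.
        -- subst P. rewrite app_assoc. reflexivity.
        -- subst Q. rewrite app_assoc. reflexivity.
        -- lia.
    + simpl. rewrite map_map. simpl. fold (map eY S). constructor; auto.
    + simpl. rewrite map_map. simpl. fold (map eY S).
      intros y [<- | Hy]; auto. apply gen_single in H. destruct H as [rhs [k1 [I _]]].
      apply in_map_iff. exists (X, rhs); auto.
    + simpl. rewrite length_map. lia.
    + exists Y2, a, b, ca, u, z, c, x, kx. repeat split; auto.
      * rewrite <- B5. subst w. repeat rewrite <- app_assoc. reflexivity.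
      * lia.
Qed.

Definition letter_eq_dec (x y : letter) : {x = y} + {x <> y}.
Proof. decide equality. Defined.

Lemma pump R st : forall n W, gen R [inl st] W n -> mR R ^ S (length R) < length W ->
  exists U V X Y Z, W = U ++ V ++ X ++ Y ++ Z /\ length (V ++ X ++ Y) <= mR R ^ S (length R) /\
    V ++ Y <> [] /\ forall i, exists k, gen R [inl st] (U ++ rep V i ++ X ++ rep Y i ++ Z) k.
Proof.
  intros n. induction n as [n IH] using (well_founded_induction lt_wf).
  intros W H Hl.
  assert (Hm : 1 <= mR R) by (unfold mR; lia).
  set (B := mR R ^ length R) in *.
  assert (HB : 1 <= B) by (apply pow_ge1; auto).
  assert (HN : mR R ^ S (length R) = mR R * B) by reflexivity.
  destruct (window R B HB n st W H) as [T [u0 [wT [z0 [c0 [kT [C0 [GT [E1 [E2 [E3 E4]]]]]]]]]]].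
  { nia. }
  destruct (repet R T (length R) [] T wT kT [] [] 0 GT (ctx_id R T) (Forall_nil _) (NoDup_nil _)
     (incl_nil_l _) ltac:(simpl; lia) E3)
    as [Y [a [b [ca [u [z [c [x [kx [D1 [D2 [D3 [D4 [D5 D6]]]]]]]]]]]]]].
  simpl in D5, D6. rewrite app_nil_r in D5.
  destruct (list_eq_dec letter_eq_dec (u ++ z) []) as [Hn|Hn].
  - apply app_eq_nil in Hn. destruct Hn as [-> ->]. simpl in D5.
    assert (G : gen R [inl st] (u0 ++ wT ++ z0) (c0 + (ca + kx))).
    { apply C0. rewrite D5. apply D1. exact D4. }
    rewrite <- E2 in G. apply (IH (c0 + (ca + kx))); auto. lia.
  - exists (u0 ++ a), u, x, z, (b ++ z0). repeat split.
    + rewrite E2, D5. repeat rewrite <- app_assoc. reflexivity.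
    + rewrite HN. assert (length wT = length (a ++ (u ++ x ++ z) ++ b)).
      { rewrite D5. repeat rewrite <- app_assoc. reflexivity. }
      rewrite !length_app in H0. rewrite !length_app. lia.
    + exact Hn.
    + intros i. exists (c0 + (ca + (i * c + kx))).
      pose proof (ctx_pump R Y u z c x kx D2 D4 i) as P.
      apply D1 in P. apply C0 in P.
      replace ((u0 ++ a) ++ rep u i ++ x ++ rep z i ++ b ++ z0)
        with (u0 ++ (a ++ (rep u i ++ x ++ rep z i) ++ b) ++ z0)
        by (repeat rewrite <- app_assoc; reflexivity). exact P.
Qed.

Lemma rt_ctx R s1 s2 p q : clos_refl_trans _ (@cfg_step letter R) s1 s2 ->
  clos_refl_trans _ (@cfg_step letter R) (p ++ s1 ++ q) (p ++ s2 ++ q).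
Proof.
  intros H. induction H.
  - apply rt_step. destruct H as [u [v [X [rhs [I [-> ->]]]]]].
    exists (p ++ u), (v ++ q), X, rhs. split; auto.
    split; repeat rewrite <- app_assoc; reflexivity.
  - apply rt_refl.
  - eapply rt_trans; eauto.
Qed.

Lemma gen_rt R s w k : gen R s w k -> clos_refl_trans _ (@cfg_step letter R) s (map inr w).
Proof.
  intros H. induction H.
  - apply rt_refl.
  - apply (rt_ctx R _ _ [inr t] []) in IHgen. simpl in IHgen. rewrite !app_nil_r in IHgen.
    exact IHgen.
  - eapply rt_trans.
    + apply rt_step. exists [], s, X, rhs. split; auto.
    + simpl. rewrite map_app. eapply rt_trans.
      * apply (rt_ctx R _ _ [] s) in IHgen1. simpl in IHgen1. exact IHgen1.
      * apply (rt_ctx R _ _ (map inr w1) []) in IHgen2. rewrite !app_nil_r in IHgen2. exact IHgen2.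
Qed.

Lemma gen_map R w : gen R (map inr w) w 0.
Proof. induction w; simpl; constructor; auto. Qed.

Lemma rt_gen R s1 s2 : clos_refl_trans _ (@cfg_step letter R) s1 s2 ->
  forall w, (exists k, gen R s2 w k) -> exists k, gen R s1 w k.
Proof.
  intros H. induction H; intros w Hw; auto.
  destruct H as [u [v [X [rhs [I [-> ->]]]]]]. destruct Hw as [k Hk].
  apply gen_split in Hk. destruct Hk as [w1 [w' [k1 [k' [-> [-> [G1 G']]]]]]].
  apply gen_split in G'. destruct G' as [w2 [w3 [k2 [k3 [-> [-> [G2 G3]]]]]]].
  exists (k1 + S (k2 + k3)). apply gen_app; auto. econstructor; eauto.
Qed.

Lemma gen_iff R st w : cfg_generates R st w <-> exists k, gen R [inl st] w k.
Proof.
  split.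
  - intros H. eapply rt_gen; eauto. exists 0. apply gen_map.
  - intros [k H]. apply gen_rt in H. exact H.
Qed.

Lemma fact_div k d : 1 <= d <= k -> (Z.of_nat d | Z.of_nat (fact k))%Z.
Proof.
  induction k; intros Hd; [lia|].
  cbn [fact]. rewrite Nat2Z.inj_mul.
  destruct (Nat.eq_dec d (S k)) as [->|Hne].
  - apply Z.divide_mul_l, Z.divide_refl.
  - apply Z.divide_mul_r, IHk. lia.
Qed.

Lemma length_rep v i : length (rep v i) = i * length v.
Proof. induction i; [reflexivity|]. rewrite rep_S, length_app, IHi. simpl. lia. Qed.

Lemma sw_pumped f U V X Y Z i :
  sw f (U ++ rep V i ++ X ++ rep Y i ++ Z) =
  (sw f (U ++ V ++ X ++ Y ++ Z) + (Z.of_nat i - 1) * (sw f V + sw f Y))%Z.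
Proof. rewrite !sw_app, !sw_rep. ring. Qed.

Theorem mainTheorem13 : ~ context_free P2bar.
Proof.
  intros [R [st HL]].
  set (N := mR R ^ S (length R)).
  set (n := S N). set (M := fact (S N)).
  assert (HM : 1 <= M) by (pose proof (lt_O_fact (S N)); unfold M; lia).
  assert (Hw : P2bar (w0 n M)) by (split; [apply pos_reduced, pos_w0 | apply w0_primitive]).
  apply HL, gen_iff in Hw. destruct Hw as [k0 Hk].
  assert (Hlen : N < length (w0 n M)).
  { unfold w0. rewrite length_app, length_rep. unfold phiA. simpl. rewrite repeat_length.
    unfold n. nia. }
  destruct (pump R st k0 (w0 n M) Hk Hlen) as [U [V [X [Y [Z [E [Hwin [Hne Hp]]]]]]]].
  fold N in Hwin.
  assert (Contra : forall i d, (2 <= d)%Z ->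
     (d | sw fa (U ++ rep V i ++ X ++ rep Y i ++ Z))%Z ->
     (d | sw fb (U ++ rep V i ++ X ++ rep Y i ++ Z))%Z -> False).
  { intros i d Hd D1 D2. destruct (Hp i) as [k Hg].
    assert (HP : P2bar (U ++ rep V i ++ X ++ rep Y i ++ Z)) by (apply HL, gen_iff; eauto).
    destruct HP as [_ [v Hb]].
    pose proof (basis_gcd _ _ _ Hb D1 D2) as D.
    apply Z.divide_pos_le in D; lia. }
  pose proof (pos_w0 n M) as Hpos. rewrite E in Hpos.
  apply Forall_app in Hpos. destruct Hpos as [PU Hpos].
  apply Forall_app in Hpos. destruct Hpos as [PV Hpos].
  apply Forall_app in Hpos. destruct Hpos as [PX Hpos].
  apply Forall_app in Hpos. destruct Hpos as [PY PZ].
  pose proof (good_w0 n M) as Hg. rewrite E in Hg.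
  replace (U ++ V ++ X ++ Y ++ Z) with (U ++ (V ++ X ++ Y) ++ Z) in Hg
    by (repeat rewrite <- app_assoc; reflexivity).
  apply good_drop in Hg. destruct Hg as [k' Hg]. apply good_take in Hg.
  assert (PVXY : pos (V ++ X ++ Y)) by (repeat (apply Forall_app; split); auto).
  pose proof (good_le1 n k' _ PVXY Hg ltac:(unfold n; lia)) as Ha1.
  rewrite !sw_app in Ha1.
  destruct (pos_sw _ PU) as [U1 [U2 U3]]. destruct (pos_sw _ PV) as [V1 [V2 V3]].
  destruct (pos_sw _ PX) as [X1 [X2 X3]]. destruct (pos_sw _ PY) as [Y1 [Y2 Y3]].
  destruct (pos_sw _ PZ) as [Z1 [Z2 Z3]].
  rewrite !length_app in Hwin.
  assert (HVY : 1 <= length V + length Y).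
  { destruct V; [destruct Y|]; simpl; try lia. exfalso; apply Hne; reflexivity. }
  destruct (sw_w0 n M) as [Wa Wb]. rewrite E in Wa, Wb.
  set (da := (sw fa V + sw fa Y)%Z).
  set (db := (sw fb V + sw fb Y)%Z).
  assert (Hdb : (db <= Z.of_nat N)%Z) by (unfold db; lia).
  assert (Hda : da = 0%Z \/ da = 1%Z) by (unfold da; lia).
  destruct Hda as [Hda | Hda].
  -
    assert (Hdb1 : (1 <= db)%Z) by (unfold db, da in *; lia).
    set (dn := S (Z.to_nat db)).
    apply (Contra 2 (Z.of_nat dn)).
    + unfold dn. lia.
    + rewrite sw_pumped, Wa. fold da. rewrite Hda. rewrite Z.mul_0_r, Z.add_0_r.
      apply fact_div. unfold dn. lia.
    + rewrite sw_pumped, Wb. fold db.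
      replace (Z.of_nat M * Z.of_nat n + 1 + (Z.of_nat 2 - 1) * db)%Z
        with (Z.of_nat M * Z.of_nat n + Z.of_nat dn)%Z by (unfold dn; lia).
      apply Z.divide_add_r; [|apply Z.divide_refl].
      apply Z.divide_mul_l. apply fact_div. unfold dn. lia.
  - set (m := (Z.of_nat M * Z.of_nat n + 1 - Z.of_nat M * db)%Z).
    assert (Hm : (2 <= m)%Z).
    { unfold m. assert (Z.of_nat n = Z.of_nat N + 1)%Z by (unfold n; lia). nia. }
    set (i := S (Z.to_nat (Z.of_nat M * (m - 1)))).
    assert (Hi : (Z.of_nat i - 1 = Z.of_nat M * (m - 1))%Z).
    { unfold i. rewrite Nat2Z.inj_succ, Z2Nat.id; [lia|nia]. }
    apply (Contra i m Hm).
    + rewrite sw_pumped, Wa. fold da. rewrite Hda, Hi. exists (Z.of_nat M). ring.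
    + rewrite sw_pumped, Wb. fold db. rewrite Hi. exists (1 + Z.of_nat M * db)%Z.
      unfold m. ring.
Qed.
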